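(* Let $k\ge 3$ be an integer such that every set of $k-1$ distinct positive integers has the LR property. Let $\{v_1,\ldots,v_k\}$ be a set of $k$ distinct positive integers with $\gcd(v_1,\ldots,v_k)=1$ but $\gcd(v_1,\ldots,v_{k-1})\neq 1$. Then $\{v_1,\ldots,v_k\}$ has the LR property.
   Context: For a real number $x$, $\|x\|$ denotes the distance from $x$ to the nearest integer. A finite set $S$ of $m$ integers has the LR (lonely runner) property if there exists a real $t$ such that $\|tv\|\ge \frac{1}{m+1}$ for all $v\in S$. The hypothesis ''every set of $k-1$ distinct positive integers has the LR property'' is what the paper calls ''the lonely runner conjecture holds for $k-1$''. *)

(* Defs.v *)
From Stdlib Require Import Reals ZArith List.
Open Scope R_scope.

Definition dist_int (x : R) : R :=
  Rmin (x - IZR (Int_part x)) (IZR (Int_part x) + 1 - x).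

(* A finite set S of m integers, given as a duplicate-free list of length m,
   has the LR property if some real t gives ||t v|| >= 1/(m+1) for all v in S. *)
Definition LR_property (S : list Z) : Prop :=
  exists t : R, forall v : Z, In v S ->
    dist_int (t * IZR v) >= 1 / (INR (length S) + 1).

(* gcd of a list of integers (gcd of the empty list is 0). *)
Definition gcd_list (l : list Z) : Z := fold_right Z.gcd 0%Z l.

Definition LRC_holds (n : nat) : Prop :=
  forall S : list Z, NoDup S -> length S = n ->
    (forall v, In v S -> (0 < v)%Z) -> LR_property S.

(* Main.v *)
Require Import Defs.
From Stdlib Require Import Reals ZArith List Lra Lia.
Open Scope R_scope.

Lemma Int_part_unique x z : IZR z <= x < IZR z + 1 -> Int_part x = z.
Proof.
  intros [H1 H2]. destruct (base_Int_part x) as [H3 H4].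
  assert (A : (z < Int_part x + 1)%Z).
  { apply lt_IZR. rewrite plus_IZR. simpl. lra. }
  assert (B : (Int_part x < z + 1)%Z).
  { apply lt_IZR. rewrite plus_IZR. simpl. lra. }
  lia.
Qed.

Lemma dist_int_shift x n : dist_int (x + IZR n) = dist_int x.
Proof.
  unfold dist_int.
  assert (E : Int_part (x + IZR n) = (Int_part x + n)%Z).
  { apply Int_part_unique. rewrite plus_IZR.
    destruct (base_Int_part x). lra. }
  rewrite E, plus_IZR.
  replace (x + IZR n - (IZR (Int_part x) + IZR n)) with (x - IZR (Int_part x)) by ring.
  replace (IZR (Int_part x) + IZR n + 1 - (x + IZR n)) with (IZR (Int_part x) + 1 - x) by ring.
  reflexivity.
Qed.

Lemma dist_int_quarter x : 1/4 <= x <= 3/4 -> dist_int x >= 1/4.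
Proof.
  intros H. unfold dist_int.
  rewrite (Int_part_unique x 0) by (simpl; lra). simpl.
  unfold Rmin; destruct (Rle_dec _ _); lra.
Qed.

Lemma gcd_list_div l v : In v l -> (gcd_list l | v)%Z.
Proof.
  induction l as [|a l IH]; simpl; [tauto|].
  intros [<-|H]. apply Z.gcd_divide_l.
  eapply Z.divide_trans. apply Z.gcd_divide_r. auto.
Qed.

Lemma gcd_list_greatest l g : (forall v, In v l -> (g | v)%Z) -> (g | gcd_list l)%Z.
Proof.
  induction l as [|a l IH]; simpl; intros H.
  apply Z.divide_0_r.
  apply Z.gcd_greatest; auto.
Qed.

Theorem lemma4 (k : nat) (vs : list Z) (vk : Z) :
  (3 <= k)%nat ->
  LRC_holds (k - 1) ->
  length (vs ++ vk :: nil) = k ->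
  NoDup (vs ++ vk :: nil) ->
  (forall v, In v (vs ++ vk :: nil) -> (0 < v)%Z) ->
  gcd_list (vs ++ vk :: nil) = 1%Z ->
  gcd_list vs <> 1%Z ->
  LR_property (vs ++ vk :: nil).
Proof.
  intros Hk HLR Hlen Hnd Hpos Hg1 Hg.
  rewrite length_app in Hlen; simpl in Hlen.
  set (d := gcd_list vs) in *.
  assert (Hdiv : forall v, In v vs -> (d | v)%Z) by (intros; apply gcd_list_div; auto).
  assert (Hv0e : exists v0, In v0 vs).
  { destruct vs as [|z l]; [simpl in Hlen; lia|]. exists z; left; auto. }
  destruct Hv0e as [v0 Hv0].
  assert (Hdnn : (0 <= d)%Z).
  { unfold d. destruct vs; simpl; [lia|apply Z.gcd_nonneg]. }
  assert (Hd2 : (2 <= d)%Z).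
  { assert (d <> 0%Z).
    { intro E. destruct (Hdiv v0 Hv0) as [q Hq]. rewrite E in Hq.
      assert (0 < v0)%Z by (apply Hpos; apply in_or_app; auto). lia. }
    lia. }
  assert (Hco : Z.gcd d vk = 1%Z).
  { assert (Hd1 : (Z.gcd d vk | 1)%Z).
    { rewrite <- Hg1. apply gcd_list_greatest. intros v Hv.
      destruct (in_app_or _ _ _ Hv) as [Hv'|Hv'].
      - eapply Z.divide_trans. apply Z.gcd_divide_l. auto.
      - destruct Hv' as [<-|[]]. apply Z.gcd_divide_r. }
    pose proof (Z.gcd_nonneg d vk).
    apply Z.divide_1_r_nonneg; auto. }
  destruct (Z.gcd_bezout _ _ _ Hco) as [b [a Hab]].
  set (S := map (fun v => (v / d)%Z) vs).
  assert (HdivE : forall v, In v vs -> v = (d * (v / d))%Z).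
  { intros v Hv. apply Z.div_exact. lia. apply Z.mod_divide. lia. auto. }
  assert (HS : LR_property S).
  { apply HLR.
    - apply NoDup_map_NoDup_ForallPairs.
      + intros x y Hx Hy Hxy. rewrite (HdivE x Hx), (HdivE y Hy), Hxy. reflexivity.
      + apply NoDup_app_remove_r in Hnd. auto.
    - unfold S. rewrite length_map. lia.
    - intros w Hw. unfold S in Hw. apply in_map_iff in Hw as [v [<- Hv]].
      assert (0 < v)%Z by (apply Hpos; apply in_or_app; auto).
      pose proof (HdivE v Hv). nia. }
  destruct HS as [t0 Ht0].
  unfold S in Ht0; rewrite length_map in Ht0.
  assert (HdR : 2 <= IZR d) by (apply IZR_le; auto).
  set (x := t0 * IZR vk / IZR d).
  set (m := up ((1/4 - x) * IZR d)).
  destruct (archimed ((1/4 - x) * IZR d)) as [Hm1 Hm2]. fold m in Hm1, Hm2.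
  exists ((t0 + IZR (a * m)) / IZR d).
  assert (Hk1 : 1 / (INR (length (vs ++ vk :: nil)) + 1) <= 1/4).
  { rewrite length_app. simpl. rewrite Hlen.
    apply le_INR in Hk. simpl in Hk.
    apply Rmult_le_reg_r with (4 * (INR k + 1)); [lra|].
    field_simplify; lra. }
  intros v Hv. destruct (in_app_or _ _ _ Hv) as [Hv'|Hv'].
  -
    assert (Hw : In (v / d)%Z (map (fun v => (v / d)%Z) vs)) by (apply (in_map (fun v => (v / d)%Z)); auto).
    specialize (Ht0 _ Hw).
    assert (Hkk : 1 / (INR (length (vs ++ vk :: nil)) + 1) <= 1 / (INR (length vs) + 1)).
    { rewrite length_app. simpl. rewrite plus_INR. simpl.
      pose proof (pos_INR (length vs)).
      apply Rmult_le_reg_r with ((INR (length vs) + 1 + 1) * (INR (length vs) + 1)); [nra|].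
      field_simplify; lra. }
    assert (Ev : (t0 + IZR (a * m)) / IZR d * IZR v = t0 * IZR (v / d) + IZR (a * m * (v / d))).
    { rewrite (HdivE v Hv') at 1. rewrite !mult_IZR. field. lra. }
    rewrite Ev, dist_int_shift. lra.
  - destruct Hv' as [<-|[]].
    replace ((t0 + IZR (a * m)) / IZR d * IZR vk)
      with ((x + IZR m / IZR d) + IZR (- (m * b))).
    2:{ unfold x. assert (E : (a * m * vk = m - m * b * d)%Z) by (rewrite <- (Z.mul_1_r m) at 2; rewrite <- Hab; ring).
        assert (E' : IZR a * IZR m * IZR vk = IZR m - IZR m * IZR b * IZR d).
        { rewrite <- !mult_IZR, <- minus_IZR. f_equal. exact E. }
        rewrite opp_IZR, !mult_IZR.
        symmetry. transitivity ((t0 * IZR vk + IZR a * IZR m * IZR vk) / IZR d). field. lra.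
        rewrite E'. field. lra. }
    rewrite dist_int_shift.
    apply Rge_trans with (1/4); [|lra].
    apply dist_int_quarter.
    split.
    + apply Rmult_le_reg_r with (IZR d); [lra|]. field_simplify; lra.
    + apply Rmult_le_reg_r with (IZR d); [lra|]. field_simplify; [|lra]. nra.
Qed.
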